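(* Let $k \geqslant 2$, and let $\pi_1, \ldots, \pi_k \geqslant 3$ be pairwise relatively prime integers, where $\pi_1=3$. Then the minimal DFA that recognizes the same language as the NFA $A_{\pi_1, \ldots, \pi_k}$ has at least $\prod_{i=1}^k (2^{\pi_i}-2)$ states.
   Context: The NFA $A_{\pi_1,\ldots,\pi_k}=(\{a,b\},Q,\{\widehat q\},\delta,\{\widehat q\})$ has states $Q=\{\widehat{q}\} \cup \bigcup_{i=1}^k \{q_{i,0}, \ldots, q_{i,\pi_i-1}\} \cup \bigcup_{i=1}^k \{r_{i,1}, \ldots, r_{i,\pi_i-2}\}$, unique initial state $\widehat q$, unique accepting state $\widehat q$, and exactly the following transitions: $\delta(\widehat{q}, a) = \{q_{1,0}, \ldots, q_{k,0}\}$; $\delta(q_{i,j},a) = \{q_{i,(j+1) \bmod \pi_i}\}$ for all $i$ and $0\leqslant j\leqslant \pi_i-1$; $\delta(q_{i,j},b) = \{r_{i,j}\}$ and $\delta(r_{i,j},a)=\{q_{i,j+1}\}$ for $1 \leqslant j \leqslant \pi_i-2$; $\delta(q_{i,0},b) = \{\widehat{q}\}$; all other transitions are empty. The language of an NFA is the set of strings on which some computation from an initial state ends in an accepting state. *)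

(* Defs.v *)
From mathcomp Require Import all_boot.
Set Implicit Arguments. Unset Strict Implicit. Unset Printing Implicit Defensive.

Inductive sym := sa | sb.

(* States of the NFA A_{pi_1,...,pi_k}:
   Qhat = \widehat q, Qs i j = q_{i,j}, Rs i j = r_{i,j}. Indices i range over
   1..k as in the paper; out-of-range states are unreachable. *)
Inductive nstate := Qhat | Qs (i j : nat) | Rs (i j : nat).

Inductive step (k : nat) (pi : nat -> nat) : nstate -> sym -> nstate -> Prop :=
| st_hat : forall i, 1 <= i <= k -> step k pi Qhat sa (Qs i 0)
| st_cyc : forall i j, 1 <= i <= k -> j < pi i ->
    step k pi (Qs i j) sa (Qs i ((j + 1) %% pi i))
| st_qb : forall i j, 1 <= i <= k -> 1 <= j <= pi i - 2 ->
    step k pi (Qs i j) sb (Rs i j)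
| st_ra : forall i j, 1 <= i <= k -> 1 <= j <= pi i - 2 ->
    step k pi (Rs i j) sa (Qs i j.+1)
| st_back : forall i, 1 <= i <= k -> step k pi (Qs i 0) sb Qhat.

Inductive reach (k : nat) (pi : nat -> nat) : nstate -> seq sym -> nstate -> Prop :=
| reach_nil : forall s, reach k pi s [::] s
| reach_cons : forall s x t w u, step k pi s x t -> reach k pi t w u ->
    reach k pi s (x :: w) u.

Definition nfa_accepts (k : nat) (pi : nat -> nat) (w : seq sym) : Prop :=
  reach k pi Qhat w Qhat.

Definition dfa_recognizes (S : finType) (s0 : S) (d : S -> sym -> S) (F : pred S)
  (L : seq sym -> Prop) : Prop :=
  forall w : seq sym, F (foldl d s0 w) <-> L w.

(* Main.v *)
Require Import Defs.
From mathcomp Require Import all_boot zify.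
From Stdlib Require Import ClassicalEpsilon.
Set Implicit Arguments. Unset Strict Implicit. Unset Printing Implicit Defensive.


Lemma reach_cat k pi s w1 w2 u :
  reach k pi s (w1 ++ w2) u <-> exists t, reach k pi s w1 t /\ reach k pi t w2 u.
Proof.
elim: w1 s => [|x w1 IH] s /=.
  split; [by exists s; split => //; constructor | by case=> t [H1 H2]; inversion H1; subst].
split.
  move=> H; inversion H; subst.
  have [t' [H1 H2]] := (IH t).1 H5.
  by exists t'; split => //; econstructor; eauto.
case=> t [H1 H2]; inversion H1; subst.
econstructor; first by eauto.
by apply/(IH t0).2; exists t.
Qed.

Lemma reach1 k pi s x u : reach k pi s [:: x] u <-> step k pi s x u.
Proof.
split; first by move=> H; inversion H; subst; inversion H5; subst.
by move=> H; econstructor; eauto; constructor.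
Qed.

Definition cfgb k (pi : nat -> nat) (X : nat -> nat -> bool) (t : nstate) : bool :=
  if t is Qs i j then [&& 1 <= i <= k, j < pi i & X i j] else false.

Definition Reached k pi w X := forall t, reach k pi Qhat w t <-> cfgb k pi X t.

Lemma Reached_ext k pi w X Y : Reached k pi w X ->
  (forall i j, 1 <= i <= k -> j < pi i -> X i j = Y i j) -> Reached k pi w Y.
Proof.
move=> H E t; rewrite H; case: t => //= i j.
case: (boolP (1 <= i <= k)) => //= Hi; case: (boolP (j < pi i)) => //= Hj.
by rewrite E.
Qed.

Lemma Reached_app k pi w v X :
  Reached k pi w X -> forall t, reach k pi Qhat (w ++ v) t <->
   exists i j, [/\ 1 <= i <= k, j < pi i, X i j & reach k pi (Qs i j) v t].
Proof.
move=> H t; rewrite reach_cat; split.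
  case=> t1 [/H H1 H2]; case: t1 H1 H2 => // i j /and3P[Hi Hj HX] H2.
  by exists i, j; split.
by case=> i [j [Hi Hj HX H2]]; exists (Qs i j); split => //; apply/H => /=; rewrite Hi Hj HX.
Qed.

Lemma step_a k pi i j t : 1 <= i <= k -> j < pi i ->
  step k pi (Qs i j) sa t <-> t = Qs i ((j + 1) %% pi i).
Proof.
move=> Hi Hj; split; first by move=> H; inversion H.
by move=> ->; constructor.
Qed.

Lemma modA1 p j : 0 < p -> j < p -> ((j + 1) %% p + p - 1) %% p = j.
Proof.
move=> Hp Hj; rewrite -addnBA // modnDml.
have -> : j + 1 + (p - 1) = j + p by lia.
by rewrite modnDr modn_small.
Qed.

Lemma modA2 p j : 0 < p -> j < p -> ((j + p - 1) %% p + 1) %% p = j.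
Proof.
move=> Hp Hj; rewrite modnDml.
have -> : j + p - 1 + 1 = j + p by lia.
by rewrite modnDr modn_small.
Qed.

Definition rotX (pi : nat -> nat) (X : nat -> nat -> bool) i j := X i ((j + pi i - 1) %% pi i).

Lemma Reached_a k pi w X : Reached k pi w X ->
  Reached k pi (w ++ [:: sa]) (rotX pi X).
Proof.
move=> H t; rewrite (Reached_app _ H); split.
  case=> i [j [Hi Hj HX /reach1 /(step_a _ Hi Hj) ->]] /=.
  have Hp : 0 < pi i by lia.
  by rewrite Hi ltn_pmod //= /rotX modA1.
case: t => //= i j /and3P[Hi Hj HX].
have Hp : 0 < pi i by lia.
exists i, ((j + pi i - 1) %% pi i); split => //; first by rewrite ltn_pmod.
apply/reach1/step_a => //; first by rewrite ltn_pmod.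
by rewrite modA2.
Qed.


Definition Rot (pi : nat -> nat) s (X : nat -> nat -> bool) i j := X i ((j + (pi i).-1 * s) %% pi i).

Lemma nseqSr (x : sym) s : nseq s.+1 x = nseq s x ++ [:: x].
Proof. by elim: s => //= s ->. Qed.

Lemma Reached_Rot k pi w X s : (forall i, 1 <= i <= k -> 0 < pi i) ->
  Reached k pi w X -> Reached k pi (w ++ nseq s sa) (Rot pi s X).
Proof.
move=> Hp H; elim: s => [|s IH].
  apply: Reached_ext; first by rewrite cats0; exact: H.
  by move=> i j _ Hj; rewrite /Rot muln0 addn0 modn_small.
rewrite nseqSr catA; apply: Reached_ext; first exact: Reached_a IH.
move=> i j Hi Hj; rewrite /rotX /Rot modnDml.
have P := Hp i Hi.
by have -> : j + pi i - 1 + (pi i).-1 * s = j + (pi i).-1 * s.+1 by rewrite mulnS; lia.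
Qed.

Lemma reach_cons_inv k pi s x w u : reach k pi s (x :: w) u ->
  exists t, step k pi s x t /\ reach k pi t w u.
Proof. by move=> H; inversion H; subst; eauto. Qed.

Lemma reach_nil_inv k pi s u : reach k pi s [::] u -> s = u.
Proof. by move=> H; inversion H. Qed.

Lemma step_b_hat k pi i j : 1 <= i <= k -> j < pi i ->
  step k pi (Qs i j) sb Qhat <-> j = 0.
Proof.
move=> Hi Hj; split; first by move=> H; inversion H.
by move=> ->; constructor.
Qed.

Lemma reach_ba k pi i j t : 1 <= i <= k -> j < pi i ->
  reach k pi (Qs i j) [:: sb; sa] t <->
  ((1 <= j <= pi i - 2) /\ t = Qs i j.+1) \/ (j = 0 /\ exists i', 1 <= i' <= k /\ t = Qs i' 0).
Proof.
move=> Hi Hj; split.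
  move=> H; have [t1 [S1 R1]] := reach_cons_inv H.
  have [t2 [S2 /reach_nil_inv E]] := reach_cons_inv R1; subst t.
  inversion S1; subst.
    by inversion S2; subst; left.
  by inversion S2; subst; right; split => //; exists i0.
case=> [[Hj2 ->]|[-> [i' [Hi' ->]]]].
  econstructor; first exact: (st_qb Hi Hj2).
  econstructor; first exact: (st_ra Hi Hj2).
  constructor.
econstructor; first exact: (st_back _ Hi).
econstructor; first exact: (st_hat _ Hi').
constructor.
Qed.

Definition baX k (X : nat -> nat -> bool) i j :=
  ((2 <= j) && X i j.-1) || ((j == 0) && has (fun i' => X i' 0) (iota 1 k)).

Lemma Reached_ba k pi w X : (forall i, 1 <= i <= k -> 3 <= pi i) ->
  Reached k pi w X -> Reached k pi (w ++ [:: sb; sa]) (baX k X).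
Proof.
move=> Hp H t; rewrite (Reached_app _ H); split.
  case=> i [j [Hi Hj HX /(reach_ba _ Hi Hj)]].
  case=> [[Hj2 ->]|[Hj0 [i' [Hi' ->]]]] /=.
    rewrite Hi /baX /= HX andbT; apply/andP; split; first by lia.
    by apply/orP; left; lia.
  rewrite Hi' /baX /=; have := Hp i' Hi'; case: (pi i') => //= _ _.
  apply/hasP; exists i; first by rewrite mem_iota; lia.
  by rewrite -Hj0.
case: t => //= i j /and3P[Hi Hj]; rewrite /baX.
case/orP=> [/andP[Hj2 HX]|/andP[/eqP Hj0 /hasP[i' Hi' HX]]].
  exists i, j.-1; split => //; first by lia.
  apply/(reach_ba _ Hi) => //; first by lia.
  by left; split; [lia| congr Qs; lia].
move: Hi'; rewrite mem_iota => Hi'.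
have Hp' := Hp i' Hi'.
exists i', 0; split => //.
- by lia.
apply/reach_ba => //; first by lia.
by right; split => //; exists i; split => //; rewrite Hj0.
Qed.

Definition baseX (X : nat -> nat -> bool) := fun (i j : nat) => j == 0.

Lemma Reached_base k pi : (forall i, 1 <= i <= k -> 0 < pi i) ->
  Reached k pi [:: sa] (fun i j => j == 0).
Proof.
move=> Hp t; rewrite reach1; split.
  move=> H; inversion H; subst => /=.
  match goal with h : is_true (_ <= _ <= _) |- _ => by rewrite h Hp end.
case: t => //= i j /and3P[Hi Hj /eqP ->]; by constructor.
Qed.


Lemma sum_rot1 p (f : nat -> nat) : 0 < p ->
  \sum_(j < p) f ((j + 1) %% p) = \sum_(j < p) f j.
Proof.
case: p => // p _.
rewrite big_ord_recr big_ord_recl /= addnC addn1 modnn; congr (_ + _).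
apply: eq_bigr => j _; rewrite modn_small //= ?addn1 //.
by rewrite ltnS.
Qed.

Lemma sum_rot p (f : nat -> nat) s : 0 < p ->
  \sum_(j < p) f ((j + s) %% p) = \sum_(j < p) f j.
Proof.
move=> Hp; elim: s => [|s IH].
  by apply: eq_bigr => j _; rewrite addn0 modn_small.
rewrite -IH -(sum_rot1 (fun x => f ((x + s) %% p))) //.
by apply: eq_bigr => j _; rewrite modnDml addnAC addn1 addnS.
Qed.

Lemma sum_bool_eq0 n (b : nat -> bool) :
  \sum_(j < n) (b j : nat) = 0 <-> forall j, j < n -> b j = false.
Proof.
elim: n => [|n IH]; first by rewrite big_ord0; split => // _ j.
rewrite big_ord_recr /=; split.
  move/eqP; rewrite addn_eq0 => /andP[/eqP /IH H1 H2] j; rewrite ltnS leq_eqVlt.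
  by case/orP => [/eqP ->|/H1]; [case: (b n) H2|].
move=> H; rewrite (H n) // addn0; apply/IH => j Hj; apply: H; lia.
Qed.

Lemma sum_bool_pos n (b : nat -> bool) j : j < n -> b j -> 0 < \sum_(i < n) (b i : nat).
Proof.
move=> Hj Hb; rewrite lt0n; apply/negP => /eqP /sum_bool_eq0 H.
by rewrite H in Hb.
Qed.

Lemma sum_bool_le n (b : nat -> bool) : \sum_(i < n) (b i : nat) <= n.
Proof.
elim: n => [|n IH]; first by rewrite big_ord0.
rewrite big_ord_recr /=; case: (b n) => /=; first by rewrite addn1 ltnS.
by rewrite addn0 leqW.
Qed.

Lemma sum_bool_lt n (b : nat -> bool) j : j < n -> b j = false -> \sum_(i < n) (b i : nat) < n.
Proof.
elim: n => [|n IH] //; rewrite big_ord_recr /= ltnS leq_eqVlt.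
case/orP => [/eqP <- -> | Hj Hb]; first by rewrite addn0 ltnS sum_bool_le.
have := IH Hj Hb; case: (b n) => /=; lia.
Qed.

Lemma sum_recl n (b : nat -> bool) :
  \sum_(i < n.+1) (b i : nat) = b 0 + \sum_(i < n) (b i.+1 : nat).
Proof. by rewrite big_ord_recl. Qed.

Lemma cnt_pred p (R Xp : nat -> bool) (e : bool) : 3 <= p ->
  (forall j, Xp j = ((1 <= j) && (j <= p - 2) && R j.+1) || ((j == 0) && e)) ->
  \sum_(j < p) (Xp j : nat) + R 0 + R 1 = \sum_(j < p) (R j : nat) + e.
Proof.
case: p => [|[|[|p]]] // _ HX.
rewrite (sum_recl _ Xp) (sum_recl _ R) (sum_recl p.+1 (fun i => R i.+1)) big_ord_recr /= !HX /=.
have -> : (p.+2 <= p.+3 - 2) = false by lia.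
rewrite /= addn0.
have -> : \sum_(i < p.+1) (Xp i.+1 : nat) = \sum_(i < p.+1) (R i.+2 : nat).
  apply: eq_bigr => i _; have Hi := ltn_ord i; rewrite HX /=.
  have H2 : (i < p.+3 - 2) = true by lia.
  by rewrite H2 orbF.
move: (\sum_(i < p.+1) (R i.+2 : nat)) => S.
clear HX; case: (R 0); case: (R 1); case: e => /=; lia.
Qed.

Definition prodp (pi : nat -> nat) n := \prod_(1 <= i < n.+1) pi i.

Lemma prodp_S pi n : prodp pi n.+1 = prodp pi n * pi n.+1.
Proof. by rewrite /prodp big_nat_recr. Qed.

Lemma dvd_prodp pi n i : 1 <= i <= n -> pi i %| prodp pi n.
Proof.
elim: n => [|n IH] Hi; first by lia.
rewrite prodp_S; case: (ltnP i n.+1) => H.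
  by apply: dvdn_mulr; apply: IH; lia.
have -> : i = n.+1 by lia.
exact: dvdn_mull.
Qed.

Lemma coprime_prodp_gen k pi n j :
  (forall i j, 1 <= i <= k -> 1 <= j <= k -> i != j -> coprime (pi i) (pi j)) ->
  n < j <= k -> coprime (prodp pi n) (pi j).
Proof.
move=> Hc; elim: n => [|n IH] Hn.
  by rewrite /prodp big_geq // coprime1n.
rewrite prodp_S coprimeMl IH; last by lia.
by rewrite Hc //; lia.
Qed.

Lemma coprime_prodp k pi n :
  (forall i j, 1 <= i <= k -> 1 <= j <= k -> i != j -> coprime (pi i) (pi j)) ->
  n < k -> coprime (prodp pi n) (pi n.+1).
Proof. by move=> Hc Hn; apply: (coprime_prodp_gen Hc); lia. Qed.

Lemma crt k pi (P : nat -> nat -> Prop) :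
  (forall i j, 1 <= i <= k -> 1 <= j <= k -> i != j -> coprime (pi i) (pi j)) ->
  (forall i, 1 <= i <= k -> exists c, c < pi i /\ forall m, m %% pi i = c -> P i m) ->
  exists m, forall i, 1 <= i <= k -> P i m.
Proof.
move=> Hc HP.
suff : forall n, n <= k -> exists s, forall i, 1 <= i <= n ->
         forall m, m %% pi i = s %% pi i -> P i m.
  by case/(_ k (leqnn k)) => s Hs; exists s => i Hi; apply: Hs.
elim=> [|n IH] Hn; first by exists 0 => i; lia.
have [s Hs] := IH (ltnW Hn).
have [c [Hcp Hcm]] := HP n.+1 (ltac:(lia)).
have Hco := coprime_prodp Hc Hn.
exists (chinese (prodp pi n) (pi n.+1) s c) => i Hi m Hm.
case: (ltnP i n.+1) => H.
  apply: Hs; first by lia.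
  rewrite Hm; have Hd := dvd_prodp pi (ltac:(lia) : 1 <= i <= n).
  by rewrite -(modn_dvdm _ Hd) chinese_modl // (modn_dvdm _ Hd).
have Ei : i = n.+1 by lia.
subst i; apply: Hcm; rewrite Hm chinese_modr // modn_small //.
Qed.


Definition cnt (pi : nat -> nat) (X : nat -> nat -> bool) i := \sum_(j < pi i) (X i j : nat).
Definition meas k pi X := \sum_(i <- iota 1 k) cnt pi X i.
Definition valid k pi X := forall i, 1 <= i <= k -> 0 < cnt pi X i < pi i.

Lemma sum_bool_ex n (b : nat -> bool) : 0 < \sum_(j < n) (b j : nat) -> exists j, j < n /\ b j.
Proof.
elim: n => [|n IH]; first by rewrite big_ord0.
rewrite big_ord_recr /=; case Hb: (b n); first by exists n.
rewrite addn0 => /IH [j [Hj Hbj]]; exists j; split => //; exact: ltnW.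
Qed.

Lemma sum_bool_exn n (b : nat -> bool) : \sum_(j < n) (b j : nat) < n -> exists j, j < n /\ ~~ b j.
Proof.
elim: n => [|n IH]; first by rewrite big_ord0.
rewrite big_ord_recr /=; case Hb: (b n); last by exists n; rewrite Hb.
rewrite addn1 ltnS => /IH [j [Hj Hbj]]; exists j; split => //; exact: ltnW.
Qed.

Lemma sum_le_seq (r : seq nat) (a b : nat -> nat) :
  (forall i, i \in r -> a i <= b i) -> \sum_(i <- r) a i <= \sum_(i <- r) b i.
Proof.
elim: r => [|x r IH] H; first by rewrite !big_nil.
rewrite !big_cons; apply: leq_add; first by apply: H; rewrite inE eqxx.
by apply: IH => i Hi; apply: H; rewrite inE Hi orbT.
Qed.

Lemma sum_lt_seq (r : seq nat) (a b : nat -> nat) :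
  (forall i, i \in r -> a i <= b i) -> (exists2 i, i \in r & a i < b i) ->
  \sum_(i <- r) a i < \sum_(i <- r) b i.
Proof.
elim: r => [|x r IH] H [i0 Hi0 Hlt]; first by rewrite in_nil in Hi0.
rewrite !big_cons; move: Hi0; rewrite inE => /orP[/eqP E|Hi0].
  subst i0; rewrite -addSn; apply: leq_add => //.
  by apply: sum_le_seq => i Hi; apply: H; rewrite inE Hi orbT.
rewrite -addnS; apply: leq_add; first by apply: H; rewrite inE eqxx.
by apply: IH; [move=> i Hi; apply: H; rewrite inE Hi orbT | exists i0].
Qed.

Lemma boundary p (X : nat -> bool) : 0 < \sum_(j < p) (X j : nat) < p ->
  exists c, c < p /\ X c && ~~ X ((c + 1) %% p).
Proof.
case/andP=> /sum_bool_ex [j0 [Hj0 X0]] /sum_bool_exn [j1 [Hj1 X1]].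
have Hp : 0 < p by lia.
case: (boolP [exists c : 'I_p, X c && ~~ X ((c + 1) %% p)]).
  by case/existsP => c Hc; exists c; split.
move/existsPn => H.
have Hall : forall n, X ((j0 + n) %% p).
  elim=> [|n IH]; first by rewrite addn0 modn_small.
  have := H (Ordinal (ltn_pmod (j0 + n) Hp)); rewrite /= IH /= negbK.
  by rewrite modnDml addn1 addnS.
have := Hall (j1 + p - j0).
have -> : j0 + (j1 + p - j0) = j1 + p by lia.
by rewrite modnDr modn_small // (negbTE X1).
Qed.

Lemma Reached_unrot k pi w X s :
  (forall i, 1 <= i <= k -> 0 < pi i) ->
  Reached k pi w (fun i j => X i ((j + s) %% pi i)) ->
  Reached k pi (w ++ nseq s sa) X.
Proof.
move=> Hp H; apply: Reached_ext; first exact: Reached_Rot Hp H.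
move=> i j Hi Hj; rewrite /Rot modnDml -addnA.
have P := Hp i Hi.
have -> : (pi i).-1 * s + s = s * pi i by rewrite -{2}(mul1n s) -mulnDl addn1 prednK // mulnC.
by rewrite addnC modnMDl modn_small.
Qed.


Lemma reach_all k pi : 2 <= k -> (forall i, 1 <= i <= k -> 3 <= pi i) ->
  (forall i j, 1 <= i <= k -> 1 <= j <= k -> i != j -> coprime (pi i) (pi j)) ->
  forall n X, valid k pi X -> meas k pi X < n -> exists w, Reached k pi w X.
Proof.
move=> Hk Hp Hc; elim=> [|n IH] X HX Hm //.
have Hp0 : forall i, 1 <= i <= k -> 0 < pi i by move=> i Hi; have := Hp i Hi; lia.
have [|s Hs] := @crt k pi (fun i m => X i (m %% pi i) && ~~ X i ((m %% pi i + 1) %% pi i)) Hc.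
  move=> i Hi; have [c [Hcp Hcx]] := boundary (HX i Hi).
  by exists c; split => // m ->.
pose R := fun i j => X i ((j + s) %% pi i).
have R0 : forall i, 1 <= i <= k -> R i 0.
  by move=> i Hi; rewrite /R add0n; case/andP: (Hs i Hi).
have R1 : forall i, 1 <= i <= k -> R i 1 = false.
  move=> i Hi; rewrite /R add1n -addn1 -modnDml; case/andP: (Hs i Hi) => _.
  exact: negbTE.
have cR : forall i, 1 <= i <= k -> cnt pi R i = cnt pi X i.
  by move=> i Hi; exact: (sum_rot (fun j => (X i j : nat)) s (Hp0 i Hi)).
have mR : meas k pi R = meas k pi X.
  rewrite /meas; apply: eq_big_seq => i; rewrite mem_iota => Hi; apply: cR; lia.
suff [w Hw] : exists w, Reached k pi w R.
  by exists (w ++ nseq s sa); exact: Reached_unrot Hp0 Hw.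
case: (boolP (all (fun i => cnt pi R i == 1) (iota 1 k))) => Hall.
  exists [:: sa]; apply: Reached_ext (Reached_base Hp0) _ => i j Hi Hj.
  have /eqP := allP Hall i (ltac:(rewrite mem_iota; lia)).
  rewrite /cnt; move: Hj (R0 i Hi); case: (pi i) => // p Hj HR0.
  rewrite sum_recl HR0 add1n => /eqP; rewrite eqSS => /eqP /(sum_bool_eq0 p (fun j => R i j.+1)) H0.
  case: j Hj => [|j] Hj; first by rewrite HR0.
  by rewrite H0.
pose nosing := all (fun i => cnt pi R i != 1) (iota 1 k).
pose e := fun i => (cnt pi R i == 1) || ((i == 1) && nosing).
pose X' := fun i j => ((1 <= j) && (j <= pi i - 2) && R i j.+1) || ((j == 0) && e i).
have cX' : forall i, 1 <= i <= k -> cnt pi X' i + 1 = cnt pi R i + e i.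
  move=> i Hi; have := @cnt_pred (pi i) (R i) (X' i) (e i) (Hp i Hi) (fun j => erefl).
  by rewrite (R0 i Hi) (R1 i Hi) addn0.
have He : exists2 i0, i0 \in iota 1 k & e i0 = false.
  case Hn: nosing.
    exists 2; first by (rewrite mem_iota; lia).
    have /negbTE H2 := allP Hn 2 (ltac:(rewrite mem_iota; lia)).
    by rewrite /e H2.
  move: Hall => /allPn [i0 Hi0 Hne]; exists i0 => //.
  by rewrite /e (negbTE Hne) Hn andbF.
have Hhas : has e (iota 1 k).
  case Hn: nosing.
    by apply/hasP; exists 1; [rewrite mem_iota; lia | rewrite /e Hn eqxx orbT].
  move/negbT: Hn => /allPn [i0 Hi0]; rewrite negbK => H1.
  by apply/hasP; exists i0 => //; rewrite /e H1.
have vX' : valid k pi X'.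
  move=> i Hi; have := cX' i Hi; have := HX i Hi; rewrite -(cR i Hi).
  have : (e i = false) -> cnt pi R i != 1 by rewrite /e; case: (cnt pi R i == 1).
  case: (e i) => /=; move: (cnt pi X' i) (cnt pi R i) => a b; first by lia.
  by move=> /(_ erefl) /eqP; lia.
have mX' : meas k pi X' < meas k pi X.
  rewrite -mR; apply: sum_lt_seq.
    move=> i; rewrite mem_iota => Hi; have := cX' i (ltac:(lia)).
    case: (e i) => /=; move: (cnt pi X' i) (cnt pi R i) => a b; lia.
  case: He => i0 Hi0 He0; exists i0 => //.
  have := cX' i0 (ltac:(move: Hi0; rewrite mem_iota; lia)).
  by rewrite He0 addn0 => <-; rewrite addn1.
have [w' Hw'] := IH X' vX' (ltac:(move: (meas k pi X') (meas k pi X) mX' Hm => a b; lia)).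
exists (w' ++ [:: sb; sa]); apply: Reached_ext (Reached_ba Hp Hw') _ => i j Hi Hj.
rewrite /baX; case: j Hj => [|[|j]] Hj /=.
- rewrite (R0 i Hi); case/hasP: Hhas => i' Hi' Hei'.
  by apply/hasP; exists i' => //; rewrite /X' /= Hei'.
- by rewrite (R1 i Hi).
- rewrite /X' /=.
  have -> : (j.+1 <= pi i - 2) = true by lia.
  by rewrite !orbF.
Qed.


Lemma accept_iff k pi w X m : (forall i, 1 <= i <= k -> 0 < pi i) ->
  Reached k pi w X ->
  (nfa_accepts k pi (w ++ (nseq m sa ++ [:: sb])) <->
   exists i, 1 <= i <= k /\ X i (((pi i).-1 * m) %% pi i)).
Proof.
move=> Hp H; rewrite /nfa_accepts catA (Reached_app _ (Reached_Rot m Hp H) Qhat).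
split.
  case=> i [j [Hi Hj HX /reach1 /(step_b_hat Hi Hj) E]]; subst j.
  by exists i; split => //; move: HX; rewrite /Rot add0n.
case=> i [Hi HX]; exists i, 0; split => //; first exact: Hp.
by apply/reach1; apply: st_back.
Qed.

Lemma T_mod p m q : 0 < p -> q < p -> m %% p = (p - q) %% p -> (p.-1 * m) %% p = q.
Proof.
move=> Hp Hq Hm.
have E1 : (p.-1 * m + m) %% p = 0.
  by rewrite -{2}(mul1n m) -mulnDl addn1 prednK // mulnC modnMl.
have E2 : (q + m) %% p = 0.
  rewrite -modnDmr Hm modnDmr addnBA; last by lia.
  by rewrite addnC addnK modnn.
have : (p.-1 * m + m == q + m %[mod p]) by rewrite E1 E2.
by rewrite eqn_modDr (modn_small Hq) => /eqP.
Qed.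

Lemma distinguish k pi (X Y : nat -> nat -> bool) i0 j0 :
  (forall i, 1 <= i <= k -> 0 < pi i) ->
  (forall i j, 1 <= i <= k -> 1 <= j <= k -> i != j -> coprime (pi i) (pi j)) ->
  valid k pi Y -> 1 <= i0 <= k -> j0 < pi i0 -> X i0 j0 -> Y i0 j0 = false ->
  exists m, (exists i, 1 <= i <= k /\ X i (((pi i).-1 * m) %% pi i)) /\
          ~ (exists i, 1 <= i <= k /\ Y i (((pi i).-1 * m) %% pi i)).
Proof.
move=> Hp Hc HY Hi0 Hj0 HX0 HY0.
have [|m Hm] := @crt k pi (fun i m => ~~ Y i (((pi i).-1 * m) %% pi i) &&
     ((i == i0) ==> (((pi i).-1 * m) %% pi i == j0))) Hc.
  move=> i Hi.
  have [q [Hq [HYq Hq0]]] : exists q, q < pi i /\ ~~ Y i q /\ ((i == i0) ==> (q == j0)).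
    case: (eqVneq i i0) => [->|Hne].
      by exists j0; rewrite HY0 eqxx.
    have /andP[_ /sum_bool_exn [q [Hq HYq]]] := HY i Hi.
    by exists q.
  exists ((pi i - q) %% pi i); split; first by rewrite ltn_pmod // (Hp i Hi).
  by move=> m Hm; rewrite (T_mod (Hp i Hi) Hq Hm) HYq Hq0.
exists m; split.
  exists i0; split => //; have /andP[_] := Hm i0 Hi0.
  by rewrite eqxx /= => /eqP ->.
case=> i [Hi HYi]; have /andP[] := Hm i Hi.
by rewrite HYi.
Qed.

Lemma sep k pi (X Y : nat -> nat -> bool) wX wY :
  (forall i, 1 <= i <= k -> 0 < pi i) ->
  (forall i j, 1 <= i <= k -> 1 <= j <= k -> i != j -> coprime (pi i) (pi j)) ->
  valid k pi Y -> Reached k pi wX X -> Reached k pi wY Y ->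
  (forall v, nfa_accepts k pi (wX ++ v) <-> nfa_accepts k pi (wY ++ v)) ->
  forall i j, 1 <= i <= k -> j < pi i -> X i j -> Y i j.
Proof.
move=> Hp Hc HY RX RY Hv i j Hi Hj HXij.
case HYij: (Y i j) => //; exfalso.
have [m [H1 H2]] := distinguish Hp Hc HY Hi Hj HXij HYij.
apply: H2; apply/(accept_iff _ Hp RY); apply/Hv; exact/(accept_iff _ Hp RX).
Qed.


Lemma card_lt_set M p : p <= M -> #|[set j : 'I_M | j < p]| = p.
Proof.
move=> Hp.
have -> : [set j : 'I_M | j < p] = widen_ord Hp @: [set: 'I_p].
  apply/setP => j; rewrite inE; apply/idP/imsetP.
    by move=> Hj; exists (Ordinal Hj) => //; apply: val_inj.
  by case=> j' _ ->; rewrite /= ltn_ord.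
rewrite card_imset ?cardsT ?card_ord //.
by move=> a b /(congr1 val) /= /val_inj.
Qed.

Lemma card_A M (B : {set 'I_M}) : 0 < #|B| ->
  #|[set Z : {set 'I_M} | (Z \subset B) && (Z != set0) && (Z != B)]| = 2 ^ #|B| - 2.
Proof.
move=> HB.
have -> : [set Z : {set 'I_M} | (Z \subset B) && (Z != set0) && (Z != B)] =
          powerset B :\: [set set0; B].
  apply/setP => Z; rewrite !inE ?powersetE.
  by case: (Z \subset B); case: (Z == set0); case: (Z == B).
rewrite cardsD card_powerset.
have -> : powerset B :&: [set set0; B] = [set set0; B].
  apply/setIidPr/subsetP => Z; rewrite !inE ?powersetE => /orP[/eqP->|/eqP->].
    exact: sub0set.
  exact: subxx.
rewrite cards2; case: eqP => // E.
by rewrite -E cards0 in HB.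
Qed.


Theorem lemma6 (k : nat) (pi : nat -> nat) :
  2 <= k ->
  (forall i, 1 <= i <= k -> 3 <= pi i) ->
  (forall i j, 1 <= i <= k -> 1 <= j <= k -> i != j -> coprime (pi i) (pi j)) ->
  pi 1 = 3 ->
  forall (S : finType) (s0 : S) (d : S -> sym -> S) (F : pred S),
    dfa_recognizes s0 d F (nfa_accepts k pi) ->
    \prod_(1 <= i < k.+1) (2 ^ pi i - 2) <= #|S|.
Proof.
move=> Hk Hp Hc _ S s0 d F Hrec.
have Hp0 : forall i, 1 <= i <= k -> 0 < pi i by move=> i Hi; have := Hp i Hi; lia.
pose M := \max_(i < k.+1) pi i.
have HM : forall i, i <= k -> pi i <= M.
  move=> i Hi; rewrite /M; exact: (@leq_bigmax _ (fun j : 'I_k.+1 => pi j) (Ordinal (Hi : i < k.+1))).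
pose B (i : 'I_k) : {set 'I_M} := [set j : 'I_M | j < pi i.+1].
pose A (i : 'I_k) := [set Z : {set 'I_M} | (Z \subset B i) && (Z != set0) && (Z != B i)].
pose Fam := (family (fun i => mem (A i)) : simpl_pred {ffun 'I_k -> {set 'I_M}}).
have cardFam : #|Fam| = \prod_(1 <= i < k.+1) (2 ^ pi i - 2).
  rewrite card_family foldrE big_image /= big_add1 /= big_mkord.
  apply: eq_big => // i _.
  have HB : #|B i| = pi i.+1 by apply: card_lt_set; apply: HM; exact: ltn_ord.
  rewrite -HB -card_A; last by rewrite HB; have := Hp i.+1 (ltac:(have := ltn_ord i; lia)); lia.
  by apply: eq_card => Z; rewrite !inE.
pose Xf (f : {ffun 'I_k -> {set 'I_M}}) i j :=
  [exists i' : 'I_k, exists j' : 'I_M, [&& i'.+1 == i, j' == j :> nat & j' \in f i']].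
have Xf_ord : forall f (i' : 'I_k) (j' : 'I_M), Xf f i'.+1 j' = (j' \in f i').
  move=> f i' j'; apply/existsP/idP => [[i'' /existsP [j'' /and3P [/eqP E1 /eqP E2 H]]] | H].
    have -> : i' = i'' by apply: val_inj; case: E1.
    by have -> : j' = j'' by apply: val_inj.
  by exists i'; apply/existsP; exists j'; rewrite !eqxx.
have Xf_gen : forall i j, 1 <= i <= k -> j < pi i ->
    exists (i' : 'I_k) (j' : 'I_M), i = i'.+1 /\ j = j'.
  move=> i j Hi Hj.
  have Hi' : i.-1 < k by lia.
  have Hj' : j < M by apply: leq_trans Hj (HM i _); lia.
  by exists (Ordinal Hi'), (Ordinal Hj'); split => //=; lia.
have valid_f : forall f, f \in Fam -> valid k pi (Xf f).
  move=> f /familyP Hf i Hi.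
  have Hi' : i.-1 < k by lia.
  pose i' := Ordinal Hi'.
  have Ei : i = i'.+1 by rewrite /=; lia.
  have := Hf i'; rewrite !inE => /andP [/andP [Hsub Hne] Hnf].
  rewrite /cnt; apply/andP; split.
    case/set0Pn: Hne => j' Hj'.
    have := subsetP Hsub j' Hj'; rewrite inE -Ei => Hjl.
    by apply: (sum_bool_pos Hjl); rewrite Ei Xf_ord.
  have : f i' \proper B i' by rewrite properEneq Hnf Hsub.
  case/properP => _ [x Hx Hnx].
  move: Hx; rewrite inE -Ei => Hx.
  by apply: (@sum_bool_lt _ (Xf f i) _ Hx); rewrite Ei Xf_ord (negbTE Hnx).
pose w f := epsilon (inhabits [::]) (fun w => Reached k pi w (Xf f)).
have word : forall f, f \in Fam -> Reached k pi (w f) (Xf f).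
  move=> f Hf; apply: (epsilon_spec (inhabits [::]) (fun w => Reached k pi w (Xf f))).
  by have := reach_all Hk Hp Hc (valid_f f Hf) (ltnSn _).
pose phi f := foldl d s0 (w f).
have inj : {in Fam &, injective phi}.
  move=> f g Hf Hg E.
  have Hv : forall v, nfa_accepts k pi (w f ++ v) <-> nfa_accepts k pi (w g ++ v).
    have E' : foldl d s0 (w f) = foldl d s0 (w g) := E.
    move=> v; split => /Hrec H; apply/Hrec; move: H; rewrite !foldl_cat.
      by rewrite E'.
    by rewrite E'.
  have Hv' : forall v, nfa_accepts k pi (w g ++ v) <-> nfa_accepts k pi (w f ++ v).
    by move=> v; rewrite Hv.
  have Hfg := sep Hp0 Hc (valid_f g Hg) (word f Hf) (word g Hg) Hv.
  have Hgf := sep Hp0 Hc (valid_f f Hf) (word g Hg) (word f Hf) Hv'.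
  apply/ffunP => i'; apply/setP => j'.
  have Hi : 1 <= i'.+1 <= k by have := ltn_ord i'; lia.
  case: (ltnP j' (pi i'.+1)) => Hj.
    rewrite -!Xf_ord; apply/idP/idP; [exact: Hfg | exact: Hgf].
  move/familyP: Hf => /(_ i'); rewrite !inE => /andP [/andP [Hsf _] _].
  move/familyP: Hg => /(_ i'); rewrite !inE => /andP [/andP [Hsg _] _].
  have Hn : j' \notin B i' by rewrite inE -ltnNge.
  by rewrite (contraNF (subsetP Hsf j') Hn) (contraNF (subsetP Hsg j') Hn).
rewrite -cardFam -(card_in_imset inj); exact: max_card.
Qed.
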